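(* Let $\mathcal{L},\tilde{\mathcal{L}}$ be distributions on $[0,\infty]$ satisfying: (H1) $\mathcal{L}$ is useful; (H2) $\mathcal{L}([0,\infty))>p_c$ and $\tilde{\mathcal{L}}([0,\infty))>p_c$; (H3) $\mathcal{L}\ne\tilde{\mathcal{L}}$; and let $(\tau,\tilde\tau)$ be a pair of random variables with marginals $\mathcal{L},\tilde{\mathcal{L}}$ and $\mathbb{E}[\tilde\tau\mid\tau]\le\tau$. Assume moreover that $\mathbb{P}(\mathbb{E}[\tilde\tau\mid\tau]=\tau)=1$ and $\{\tau<\infty\}=\{\tilde\tau<\infty\}$ almost surely. Then there exist $\beta>0$ and $\delta>0$ such that \[\mathbb{P}\big(\tau<\infty,\ \mathbb{P}(\tilde\tau\le\tau-2\delta\mid\tau)\ge\beta,\ \mathbb{P}(\tilde\tau\ge\tau\mid\tau)\ge\beta\big)>0.\]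
   Context: $p_c$ / $\overrightarrow{p_c}$: critical probabilities of Bernoulli / oriented Bernoulli bond percolation on $\mathbb{Z}^d$, $d\ge2$. With $t_{\min}$ the minimum of the support of $\mathcal{L}$, $\mathcal{L}$ is useful if $\mathcal{L}(\{t_{\min}\})<p_c$ when $t_{\min}=0$ and $<\overrightarrow{p_c}$ when $t_{\min}>0$. *)

(* Defs.v *)
From HB Require Import structures.
From mathcomp Require Import all_boot all_order all_algebra.
From mathcomp Require Import all_classical all_reals all_analysis measurable_realfun.
Set Implicit Arguments. Unset Strict Implicit. Unset Printing Implicit Defensive.
Import Order.TTheory GRing.Theory Num.Theory.
Local Open Scope classical_set_scope.
Local Open Scope ring_scope.

(* Vertices of the box {-n..n}^d, shifted to {0..2n}^d; the origin is the
   center (n,...,n). *)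
Definition vtx (d n : nat) := {ffun 'I_d -> 'I_(n.*2.+1)}.

Definition center (d n : nat) : vtx d n := [ffun _ => inord n].

Definition on_boundary (d n : nat) (x : vtx d n) : bool :=
  [exists i, (nat_of_ord (x i) == 0%N) || (nat_of_ord (x i) == n.*2)].

(* (x,y) is a nearest-neighbour edge with y = x + e_i for some i
   (each undirected edge of the box is represented exactly once,
   and this is also the oriented edge x -> x + e_i). *)
Definition pedge (d n : nat) (x y : vtx d n) : bool :=
  [exists i, (nat_of_ord (y i) == (nat_of_ord (x i)).+1) &&
             [forall j, (j != i) ==> (y j == x j)]].

Definition box_edges (d n : nat) : {set vtx d n * vtx d n} :=
  [set e | pedge e.1 e.2].

Definition open_rel (d n : nat) (w : {set vtx d n * vtx d n}) : rel (vtx d n) :=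
  fun x y => ((x, y) \in w) || ((y, x) \in w).
Definition oriented_open_rel (d n : nat) (w : {set vtx d n * vtx d n})
  : rel (vtx d n) := fun x y => (x, y) \in w.

(* probability, under the Bernoulli(p) product measure on the edges of the
   box, that the origin is joined by an open (resp. open oriented) path to the
   boundary of the box of radius n *)
Definition crossing_prob (R : realType) (oriented : bool) (d n : nat) (p : R)
  : R :=
  \sum_(w : {set vtx d n * vtx d n} | w \subset box_edges d n)
     p ^+ #|w| * (1 - p) ^+ (#|box_edges d n| - #|w|)
     * ([exists v, on_boundary v &&
          connect (if oriented then oriented_open_rel w else open_rel w)
                  (center d n) v] : bool)%:R.

(* theta(p) = lim_n crossing_prob p n (decreasing), so theta(p) = 0 iff
   crossing probabilities become arbitrarily small. *)
Definition no_percolation (R : realType) (oriented : bool) (d : nat) (p : R)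
  : Prop := forall eps : R, 0 < eps -> exists n, crossing_prob oriented d n p < eps.

Definition pc (R : realType) (d : nat) : R :=
  sup [set p : R | 0 <= p <= 1 /\ no_percolation false d p].
Definition pc_oriented (R : realType) (d : nat) : R :=
  sup [set p : R | 0 <= p <= 1 /\ no_percolation true d p].

Local Open Scope ereal_scope.

Definition law_support (d : measure_display) (Omega : measurableType d)
  (R : realType) (P : probability Omega R) (tau : Omega -> \bar R)
  : set (\bar R) :=
  [set t | forall U : set (\bar R), open U -> U t -> 0 < P (tau @^-1` U)].

Definition t_min (d : measure_display) (Omega : measurableType d)
  (R : realType) (P : probability Omega R) (tau : Omega -> \bar R) : \bar R :=
  ereal_inf (law_support P tau).

Definition useful (d : measure_display) (Omega : measurableType d)
  (R : realType) (dim : nat) (P : probability Omega R) (tau : Omega -> \bar R)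
  : Prop :=
  let tm := t_min P tau in
  (tm = 0 -> P [set w | tau w = tm] < (pc R dim)%:E) /\
  (0 < tm -> P [set w | tau w = tm] < (pc_oriented R dim)%:E).

(* g is a version of E[X | sigma(tau)] for a [0,+oo]-valued X:
   g is [0,+oo]-valued, sigma(tau)-measurable and has the same integrals
   as X on every event of sigma(tau). *)
Definition cond_exp_version (d : measure_display) (Omega : measurableType d)
  (R : realType) (P : probability Omega R) (tau X g : Omega -> \bar R) : Prop :=
  (forall w, 0 <= g w) /\
  (forall B : set (\bar R), measurable B ->
     exists C : set (\bar R), measurable C /\ tau @^-1` C = g @^-1` B) /\
  (forall C : set (\bar R), measurable C ->
     \int[P]_(w in tau @^-1` C) X w = \int[P]_(w in tau @^-1` C) g w).

Definition cond_prob_version (d : measure_display) (Omega : measurableType d)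
  (R : realType) (P : probability Omega R) (tau : Omega -> \bar R)
  (A : set Omega) (g : Omega -> \bar R) : Prop :=
  cond_exp_version P tau (fun w => (\1_A w)%:E) g.

(* Main.v *)
Require Import Defs.
From HB Require Import structures.
From mathcomp Require Import all_boot all_order all_algebra.
From mathcomp Require Import all_classical all_reals all_analysis measurable_realfun.
From mathcomp Require Import lra.
Import Order.TTheory GRing.Theory Num.Theory.
Local Open Scope classical_set_scope.
Local Open Scope ring_scope.
Local Open Scope ereal_scope.

Lemma key_ineq d (T : measurableType d) (R : realType) (P : probability T R)
  (E : set T) (a b u v : T -> \bar R) :
  measurable E ->
  measurable_fun setT a -> measurable_fun setT b ->
  measurable_fun setT u -> measurable_fun setT v ->
  (forall w, 0 <= a w) -> (forall w, 0 <= b w) ->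
  (forall w, 0 <= u w) -> (forall w, 0 <= v w) ->
  \int[P]_(w in E) a w = \int[P]_(w in E) b w ->
  \int[P]_(w in E) a w \is a fin_num ->
  {ae P, forall w, E w -> u w + a w <= b w + v w} ->
  \int[P]_(w in E) u w <= \int[P]_(w in E) v w.
Proof.
move=> mE ma mb mu mv a0 b0 u0 v0 hab hfin hle.
have H : \int[P]_(w in E) (u w + a w) <= \int[P]_(w in E) (b w + v w).
  apply: ae_ge0_le_integral => //.
  - by move=> w _; apply: adde_ge0.
  - by apply: emeasurable_funD; exact: measurable_funTS.
  - by move=> w _; apply: adde_ge0.
  - by apply: emeasurable_funD; exact: measurable_funTS.
move: H; rewrite ge0_integralD //; last 2 first.
  - exact: measurable_funTS.
  - exact: measurable_funTS.
rewrite ge0_integralD //; last 2 first.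
  - exact: measurable_funTS.
  - exact: measurable_funTS.
by rewrite -hab addeC leeD2lE.
Qed.

Lemma cont_ext d (T : measurableType d) (R : realType) (P : probability T R)
  (f : T -> \bar R) (intf : P.-integrable setT f) (f0 : forall x, 0 <= f x)
  (e : R) : (0 < e)%R ->
  exists dd : R, (0 < dd)%R /\ forall A, measurable A -> P A < dd%:E ->
    \int[P]_(x in A) f x < e%:E.
Proof.
move=> e0.
have := dominates_induced intf; set nu := induced_charge _ => dom.
have [Pp [Nn pn]] := Hahn_decomposition nu.
have [r [r0 re]] := charge_variation_continuous pn dom e0.
exists r; split => // A mA Ad.
have := re _ mA Ad; apply: le_lt_trans.
apply: le_trans (abse_charge_variation _ _) => //.
rewrite [X in `|X|](_ : _ = \int[P]_(x in A) f x); last first.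
  rewrite /induced_charge /=.
  by apply: eq_integral => x _ /=; rewrite gee0_abs.
by rewrite gee0_abs // integral_ge0.
Qed.

Lemma null_diff d (T : measurableType d) (R : realType) (P : probability T R)
  (X Z : set T) : measurable X -> measurable Z -> P Z = 0 -> P (X `\` Z) = P X.
Proof.
move=> mX mZ PZ.
rewrite (measureDI P mX mZ); set t := (X in _ = _ + X).
suff -> : t = 0 by rewrite adde0.
rewrite /t; apply/eqP; rewrite eq_le measure_ge0 andbT -PZ le_measure // ?inE //.
exact: measurableI.
Qed.
Lemma null_bigcup d (T : measurableType d) (R : realType) (P : probability T R)
  (F : nat -> set T) : (forall k, measurable (F k)) -> (forall k, P (F k) = 0) ->
  P (\bigcup_k F k) = 0.
Proof.
move=> mF PF.
have [A [mA PA sA]] : P.-negligible (\bigcup_k F k).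
  by apply: negligible_bigcup => k; exists (F k); split; [exact: mF|exact: PF|].
apply/eqP; rewrite eq_le measure_ge0 andbT -PA le_measure // ?inE //.
exact: bigcup_measurable.
Qed.

Lemma null_setU d (T : measurableType d) (R : realType) (P : probability T R)
  (A B : set T) : measurable A -> measurable B -> P A = 0 -> P B = 0 ->
  P (A `|` B) = 0.
Proof.
move=> mA mB PA PB; apply/eqP; rewrite eq_le measure_ge0 andbT.
apply: le_trans (measureU2 P mA mB) _.
set a := (X in X + _); set b := (X in _ + X).
have -> : a = 0 by exact: PA.
have -> : b = 0 by exact: PB.
by rewrite adde0.
Qed.

Lemma mle (R : realType) (r : \bar R) : measurable [set x : \bar R | x <= r].
Proof.
have := @emeasurable_itv R `]-oo, r]; congr measurable.
Qed.

Lemma mlt (R : realType) (r : \bar R) : measurable [set x : \bar R | x < r].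
Proof.
have := @emeasurable_itv R `]-oo, r[; congr measurable.
Qed.

Lemma half2 (R : realType) (x : R) : (2 * (x / 2) = x)%R.
Proof. lra. Qed.
Lemma pw (R : realType) (t s : \bar R) (δ : R) (a1 a2 : bool) :
  (0 < δ)%R -> 0 <= t -> 0 <= s -> t < +oo ->
  (a1 -> s <= t - (2 * δ)%:E) -> (~~ a2 -> s < t) ->
  (2 * δ)%:E * (a1%:R)%:E + s <= t + s * (a2%:R)%:E.
Proof.
move=> δ0 t0 s0 tf h1 h2.
have [tr Et] : exists tr, t = tr%:E by move: t0 tf h1 h2; case: t => [tr| |] //; exists tr.
subst t.
have t0' : (0 <= tr)%R by rewrite -lee_fin.
case: s s0 h1 h2 => [s| |] // s0 h1 h2; last first.
  case: a1 h1 => h1; first by have := h1 isT.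
  case: a2 h2 => h2; last by have := h2 isT.
  by rewrite /= mulr1n mule1 mulr0n mule0 add0e addey.
have s0' : (0 <= s)%R by rewrite -lee_fin.
case: a1 h1; case: a2 h2 => /= h2 h1;
  rewrite ?mulr1n ?mulr0n ?mule1 ?mule0 ?add0e ?adde0 -?EFinD ?lee_fin.
- have := h1 isT; rewrite -EFinB lee_fin; lra.
- have := h1 isT; rewrite -EFinB lee_fin; have := h2 isT; rewrite lte_fin; lra.
- lra.
- have := h2 isT; rewrite lte_fin; lra.
Qed.

Theorem lemma3p2 (R : realType) (dim : nat) (hdim : (2 <= dim)%N)
  (d : measure_display) (Omega : measurableType d) (P : probability Omega R)
  (tau taut : Omega -> \bar R)
  (mtau : measurable_fun setT tau) (mtaut : measurable_fun setT taut)
  (tau_ge0 : forall w, 0 <= tau w) (taut_ge0 : forall w, 0 <= taut w)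
  (H1 : useful dim P tau)
  (H2 : (pc R dim)%:E < P [set w | tau w < +oo] /\
        (pc R dim)%:E < P [set w | taut w < +oo])
  (H3 : ~ (forall B : set (\bar R), measurable B ->
             P (tau @^-1` B) = P (taut @^-1` B)))
  (Hce : exists g, cond_exp_version P tau taut g /\
           {ae P, forall w, g w <= tau w} /\
           {ae P, forall w, g w = tau w})
  (Hfin : {ae P, forall w, (tau w < +oo) = (taut w < +oo)}) :
  exists beta : R, exists delta : R, (0 < beta)%R /\ (0 < delta)%R /\
    forall c1 c2 : Omega -> \bar R,
      cond_prob_version P tau
        [set w | taut w <= tau w - (2 * delta)%:E] c1 ->
      cond_prob_version P tau [set w | tau w <= taut w] c2 ->
      0 < P [set w | tau w < +oo /\ beta%:E <= c1 w /\ beta%:E <= c2 w].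
Proof.
have mpre : forall C, measurable C -> measurable (tau @^-1` C).
  by move=> C mC; rewrite -[X in measurable X]setTI; exact: mtau.
have mpret : forall C, measurable C -> measurable (taut @^-1` C).
  by move=> C mC; rewrite -[X in measurable X]setTI; exact: mtaut.
case: Hce => g [[g0 [gm gint]] [_ gae]].
have mg : measurable_fun setT g.
  move=> _ B mB; have [C [mC <-]] := gm B mB; rewrite setTI; exact: mpre.
have Hint : forall C, measurable C ->
    \int[P]_(w in tau @^-1` C) taut w = \int[P]_(w in tau @^-1` C) tau w.
  move=> C mC; rewrite gint //; apply: ae_eq_integral.
  - exact: mpre.
  - exact: measurable_funTS.
  - exact: measurable_funTS.
  - by apply: filterS gae => w ->.
pose G := fun N : nat => tau @^-1` [set x | x <= N%:R%:E].
have mG N : measurable (G N) by exact/mpre/mle.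
have GC : forall N C, measurable C -> C `<=` [set x | x <= N%:R%:E] ->
    \int[P]_(w in tau @^-1` C) tau w \is a fin_num.
  move=> N C mC CN.
  have i0 : 0 <= \int[P]_(w in tau @^-1` C) tau w.
    by apply: integral_ge0 => w _; exact: tau_ge0.
  rewrite ge0_fin_numE //.
  apply: (@le_lt_trans _ _ (\int[P]_(w in tau @^-1` C) (cst N%:R%:E w))).
    apply: ge0_le_integral.
    - exact: mpre.
    - by move=> w _; exact: tau_ge0.
    - exact: measurable_funTS.
    - exact: measurable_funTS.
    - by move=> w /CN.
  rewrite integral_cst; last exact: mpre.
  have PX : P (tau @^-1` C) \is a fin_num.
    by rewrite ge0_fin_numE // (le_lt_trans (probability_le1 _ (mpre _ mC))) ?ltry.
  by rewrite -ge0_fin_numE ?mule_ge0 ?fin_numM.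
pose A1 := fun δ : R => [set w | taut w <= tau w - (2 * δ)%:E].
have mA1 δ : measurable (A1 δ).
  rewrite -[X in measurable X]setTI; apply: measurable_lee => //.
  by apply: emeasurable_funB => //; exact: measurable_cst.
pose A2 := [set w | tau w <= taut w].
have mA2 : measurable A2.
  by rewrite -[X in measurable X]setTI; apply: measurable_lee.
have step1 : exists (N : nat) (δ : R), (0 < δ)%R /\ 0 < P (G N `&` A1 δ).
  apply: contrapT => Hn; apply: H3 => B mB.
  have Hz N δ : (0 < δ)%R -> P (G N `&` A1 δ) = 0.
    move=> δ0; apply/eqP; rewrite eq_le measure_ge0 andbT leNgt; apply/negP => h.
    by apply: Hn; exists N, δ.
  pose Z1 N := \bigcup_k (G N `&` A1 (k.+1%:R^-1 / 2)%R).
  have mZ1 N : measurable (Z1 N).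
    by apply: bigcup_measurable => k _; exact: measurableI.
  have PZ1 N : P (Z1 N) = 0.
    apply: null_bigcup => k; first exact: measurableI.
    by apply: Hz; rewrite divr_gt0.
  have geZ1 N w : G N w -> ~ Z1 N w -> tau w <= taut w.
    rewrite /G /preimage /=.
    move=> GNw nZ.
    have := tau_ge0 w; have := taut_ge0 w.
    move: GNw nZ; case Et: (tau w) => [t||]; case Es: (taut w) => [s||] //=;
      rewrite ?leey // => GNw nZ _ _.
    rewrite lee_fin; apply: contrapT => /negP; rewrite -ltNge => st.
    have [k hk] := ltr_add_invr st.
    apply: nZ; exists k => //; split; rewrite /G /preimage /= ?Et //.
    by rewrite /A1 /= Et Es half2 -EFinB lee_fin lerBrDr ltW.
  pose Z2 N k := G N `&` [set w | tau w + (k.+1%:R^-1)%:E <= taut w].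
  have mZ2 N k : measurable (Z2 N k).
    apply: measurableI => //; rewrite -[X in measurable X]setTI.
    by apply: measurable_lee => //; apply: emeasurable_funD => //; exact: measurable_cst.
  have PZ2 N k : P (Z2 N k) = 0.
    pose η : R := (k.+1%:R^-1)%R.
    have η0 : (0 < η)%R by rewrite invr_gt0.
    pose Bs := [set w | tau w + η%:E <= taut w].
    have mBs : measurable Bs.
      rewrite -[X in measurable X]setTI.
      by apply: measurable_lee => //; apply: emeasurable_funD => //; exact: measurable_cst.
    have mI : measurable_fun setT (fun w => (\1_Bs w)%:E : \bar R).
      by apply/measurable_EFinP; exact: measurable_indic.
    have : \int[P]_(w in G N) (η%:E * (\1_Bs w)%:E) <= \int[P]_(w in G N) cst 0 w.
      apply: (@key_ineq _ _ _ P (G N) tau taut _ _ (mG N) mtau mtaut _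
        (measurable_cst _) tau_ge0 taut_ge0).
      - by apply: emeasurable_funM => //; exact: measurable_cst.
      - by move=> w; rewrite mule_ge0 // lee_fin ?indicE // ltW.
      - by [].
      - by rewrite Hint //; exact: mle.
      - by apply: (GC N) => //; exact: mle.
      - exists (Z1 N); split => // w /= /not_implyP [GNw Hw].
        apply: contrapT => nZ; apply: Hw; have := geZ1 N w GNw nZ.
        rewrite adde0 indicE; have [wB|wB] := boolP (w \in Bs).
          by rewrite mulr1n mule1 addeC => _; rewrite inE in wB.
        by rewrite mulr0n mule0 add0e.
    have hZ : \int[P]_(w in G N) (η%:E * (\1_Bs w)%:E) = η%:E * P (Bs `&` G N).
      rewrite ge0_integralZl //.
      - by rewrite integral_indic.
      - exact: measurable_funTS.
      - by rewrite lee_fin ltW.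
    rewrite integral0 hZ.
    rewrite pmule_rle0 ?lte_fin // => h.
    apply/eqP; rewrite eq_le measure_ge0 andbT; apply: le_trans h; rewrite setIC; exact: lexx.
  have [Zf [mZf PZf sZf]] := Hfin.
  pose Z := (\bigcup_N Z1 N) `|` (\bigcup_N \bigcup_k Z2 N k) `|` Zf.
  have mZ : measurable Z.
    apply: measurableU => //; apply: measurableU.
      by apply: bigcup_measurable => n _.
    by apply: bigcup_measurable => n _; apply: bigcup_measurable => k _.
  have PZ : P Z = 0.
    apply: null_setU => //.
    - apply: measurableU; first by apply: bigcup_measurable => n _.
      by apply: bigcup_measurable => n _; apply: bigcup_measurable => k _.
    - apply: null_setU.
      + by apply: bigcup_measurable => n _.
      + by apply: bigcup_measurable => n _; apply: bigcup_measurable => k _.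
      + exact: null_bigcup.
      + apply: null_bigcup => n; first by apply: bigcup_measurable => k _.
        exact: null_bigcup.
  have eqZ w : ~ Z w -> tau w = taut w.
    move=> nZ.
    have nZ1 N : ~ Z1 N w by move=> h; apply: nZ; left; left; exists N.
    have nZ2 N k : ~ Z2 N k w by move=> h; apply: nZ; left; right; exists N => //; exists k.
    have hf : (tau w < +oo) = (taut w < +oo).
      by apply: contrapT => h; apply: nZ; right; apply: sZf.
    have t0 := tau_ge0 w.
    move: hf t0; case Et: (tau w) => [t||] hf t0 //; last first.
      move: hf; rewrite ltxx; case: (taut w) (taut_ge0 w) => [s||] //= _.
      by rewrite ltry.
    rewrite lee_fin in t0.
    have tN := ltW (archi_boundP t0).
    have GNw : G (Num.Def.archi_bound t) w by rewrite /G /preimage /= Et lee_fin.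
    have le1 := geZ1 _ w GNw (nZ1 _); rewrite Et in le1.
    move: le1; case Es: (taut w) => [s||] le1; last first.
    - by have := taut_ge0 w; rewrite Es.
    - exfalso; apply: (nZ2 (Num.Def.archi_bound t) 0%N); split => //=.
      by rewrite Es leey.
    congr EFin; apply/eqP; rewrite eq_le -lee_fin le1 /=.
    apply: contrapT => /negP; rewrite -ltNge => st.
    have [k hk] := ltr_add_invr st.
    apply: (nZ2 (Num.Def.archi_bound t) k); split => //=.
    by rewrite Et Es -EFinD lee_fin ltW.
  rewrite -(@null_diff _ _ _ P _ _ (mpre _ mB) mZ PZ) -(@null_diff _ _ _ P _ _ (mpret _ mB) mZ PZ).
  congr (P _); apply/seteqP; split => w [hB hZ]; split => //.
    by rewrite /preimage /= -(eqZ w hZ).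
  by rewrite /preimage /= (eqZ w hZ).
have [N [δ [δ0 pos]]] := step1.
have mGA : measurable (G N `&` A1 δ) by exact: measurableI.
have pfin : P (G N `&` A1 δ) \is a fin_num.
  by rewrite ge0_fin_numE // (le_lt_trans (probability_le1 _ mGA)) ?ltry.
pose pr := fine (P (G N `&` A1 δ)).
have prE : P (G N `&` A1 δ) = pr%:E by rewrite fineK.
have pr0 : (0 < pr)%R by rewrite -lte_fin -prE.
pose f := fun w => taut w * (\1_(G N) w)%:E.
have mf : measurable_fun setT f.
  apply: emeasurable_funM => //; apply/measurable_EFinP; exact: measurable_indic.
have f0 w : 0 <= f w by rewrite mule_ge0 // lee_fin indicE.
have intf : P.-integrable setT f.
  apply/integrableP; split => //.
  have -> : \int[P]_(x in setT) `|f x| = \int[P]_(x in setT) f x.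
    by apply: eq_integral => x _; rewrite gee0_abs.
  rewrite -__deprecated__integral_setI_indic // setTI Hint; last exact: mle.
  rewrite -ge0_fin_numE; first by apply: (GC N) => //; exact: mle.
  by apply: integral_ge0 => w _; exact: tau_ge0.
have ep : (0 < δ * pr / 2)%R by rewrite divr_gt0 // mulr_gt0.
have [dd [dd0 hdd]] := @cont_ext _ _ _ P f intf f0 _ ep.
pose β := Num.min (pr / 4)%R (dd / 2)%R.
have β0 : (0 < β)%R by rewrite lt_min !divr_gt0.
have βp : (β <= pr / 4)%R by rewrite ge_min lexx.
have βd : (β <= dd / 2)%R by rewrite ge_min lexx orbT.
exists β, δ; split => //; split => // c1 c2 [c10 [c1m c1int]] [c20 [c2m c2int]].
apply: contrapT => Hneg.
pose S := [set w | tau w < +oo /\ β%:E <= c1 w /\ β%:E <= c2 w].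
have PS : P S = 0.
  by apply/eqP; rewrite eq_le measure_ge0 andbT leNgt; exact/negP.
have [C1 [mC1 eC1]] := c1m _ (mlt _ β%:E).
have [C2 [mC2 eC2]] := c2m _ (mlt _ β%:E).
pose GN' := [set x : \bar R | x <= N%:R%:E].
have mGN' : measurable GN' := mle _ _.
pose E1 := tau @^-1` (C1 `&` GN').
pose E2 := tau @^-1` (~` C1 `&` C2 `&` GN').
have mE1 : measurable E1 by apply: mpre; exact: measurableI.
have mE2 : measurable E2.
  apply: mpre; apply: measurableI => //; apply: measurableI => //.
  exact: measurableC.
have mc1 : measurable_fun setT c1.
  move=> _ B mB; have [C [mC <-]] := c1m B mB; rewrite setTI; exact: mpre.
have mc2 : measurable_fun setT c2.
  move=> _ B mB; have [C [mC <-]] := c2m B mB; rewrite setTI; exact: mpre.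
have hE1 : P (A1 δ `&` E1) <= β%:E.
  have -> : P (A1 δ `&` E1) = \int[P]_(w in E1) c1 w.
    rewrite -integral_indic //; apply: c1int; exact: measurableI.
  apply: (@le_trans _ _ (\int[P]_(w in E1) cst β%:E w)).
    apply: ge0_le_integral.
    - exact: mE1.
    - by move=> w _; exact: c10.
    - exact: measurable_funTS.
    - exact: measurable_cst.
    - move=> w [h1 _]; have : (c1 @^-1` [set x | x < β%:E]) w by rewrite -eC1.
      by move=> /ltW.
  rewrite integral_cst // -[leRHS]mule1; apply: lee_wpmul2l.
    by rewrite lee_fin ltW.
  exact: probability_le1.
have hE2 : P (A2 `&` E2) <= β%:E.
  have -> : P (A2 `&` E2) = \int[P]_(w in E2) c2 w.
    rewrite -integral_indic //; apply: c2int.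
    by apply: measurableI => //; apply: measurableI => //; exact: measurableC.
  apply: (@le_trans _ _ (\int[P]_(w in E2) cst β%:E w)).
    apply: ge0_le_integral.
    - exact: mE2.
    - by move=> w _; exact: c20.
    - exact: measurable_funTS.
    - exact: measurable_cst.
    - move=> w [[_ h2] _]; have : (c2 @^-1` [set x | x < β%:E]) w by rewrite -eC2.
      by move=> /ltW.
  rewrite integral_cst // -[leRHS]mule1; apply: lee_wpmul2l.
    by rewrite lee_fin ltW.
  exact: probability_le1.
have mEA : measurable (E2 `&` A2) by exact: measurableI.
have hc : \int[P]_(w in E2 `&` A2) taut w < (δ * pr / 2)%:E.
  have -> : \int[P]_(w in E2 `&` A2) taut w = \int[P]_(w in E2 `&` A2) f w.
    apply: eq_integral => w; rewrite inE => -[[[_ _] hN] _].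
    rewrite /f indicE.
    have -> : (w \in G N) = true by apply/mem_set.
    by rewrite mulr1n mule1.
  apply: hdd => //.
  rewrite setIC; apply: le_lt_trans hE2 _; rewrite lte_fin.
  apply: le_lt_trans βd _; rewrite ltr_pdivrMr //; lra.
have hd : \int[P]_(w in E2) ((2 * δ)%:E * (\1_(A1 δ) w)%:E) <=
          \int[P]_(w in E2) (taut w * (\1_A2 w)%:E).
  apply: (@key_ineq _ _ _ P E2 taut tau _ _ mE2 mtaut mtau _ _ taut_ge0 tau_ge0).
  - apply: emeasurable_funM; first exact: measurable_cst.
    by apply/measurable_EFinP; exact: measurable_indic.
  - apply: emeasurable_funM => //.
    by apply/measurable_EFinP; exact: measurable_indic.
  - by move=> w; rewrite mule_ge0 // lee_fin ?indicE // mulr_ge0 // ltW.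
  - by move=> w; rewrite mule_ge0 // lee_fin indicE.
  - apply: Hint.
    by apply: measurableI => //; apply: measurableI => //; exact: measurableC.
  - rewrite Hint; last first.
      by apply: measurableI => //; apply: measurableI => //; exact: measurableC.
    apply: (GC N) => //.
      by apply: measurableI => //; apply: measurableI => //; exact: measurableC.
  - apply: (aeW P) => w [_ hN]; rewrite !indicE.
    apply: pw => //.
    + by apply: le_lt_trans hN _; rewrite ltry.
    + by rewrite inE.
    + by move=> /negP h; rewrite ltNge; apply/negP => h'; apply: h; apply/mem_set.
have mI1 : measurable (A1 δ `&` E1) by exact: measurableI.
have mI2 : measurable (A1 δ `&` E2) by exact: measurableI.
have hdL : \int[P]_(w in E2) ((2 * δ)%:E * (\1_(A1 δ) w)%:E) =
           (2 * δ)%:E * P (A1 δ `&` E2).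
  rewrite ge0_integralZl //; first by rewrite integral_indic.
  all: try (by apply: measurable_funTS; apply/measurable_EFinP; exact: measurable_indic).
  all: try (by move=> w _; rewrite lee_fin indicE).
  first [by rewrite lee_fin mulr_ge0 // ltW | by apply/ltW; rewrite lte_fin mulr_gt0 | (change (0%:E <= (2 * δ)%:E); by rewrite lee_fin mulr_ge0 // ltW)].
have hdR : \int[P]_(w in E2) (taut w * (\1_A2 w)%:E) =
           \int[P]_(w in E2 `&` A2) taut w.
  by rewrite -__deprecated__integral_setI_indic.
have hq : (2 * δ)%:E * P (A1 δ `&` E2) < (δ * pr / 2)%:E.
  by rewrite -hdL; apply: le_lt_trans hd _; rewrite hdR.
have cov : G N `&` A1 δ `<=` S `|` (A1 δ `&` E1) `|` (A1 δ `&` E2).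
  move=> w [GNw A1w].
  have tN : tau w <= N%:R%:E by [].
  have [h1|h1] := leP (β%:E) (c1 w); last first.
    left; right; split => //; split => //.
    by have : (c1 @^-1` [set x | x < β%:E]) w by []; rewrite -eC1.
  have [h2|h2] := leP (β%:E) (c2 w).
    left; left; split; last by split.
    by apply: le_lt_trans tN _; rewrite ltry.
  right; split => //; split => //; split.
    move=> hC1; have : (tau @^-1` C1) w by [].
    by rewrite eC1 /= ltNge h1.
  by have : (c2 @^-1` [set x | x < β%:E]) w by []; rewrite -eC2.
have mS : measurable S.
  have -> : S = tau @^-1` [set x | x < +oo] `&`
      ~` (c1 @^-1` [set x | x < β%:E]) `&` ~` (c2 @^-1` [set x | x < β%:E]).
    apply/seteqP; split => w /=.
    - move=> [h0 [h1 h2]]; split; [split|] => //=.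
        by apply/negP; rewrite -leNgt.
      by apply/negP; rewrite -leNgt.
    - move=> [[h0 h1] h2]; split => //; split; rewrite leNgt; exact/negP.
  rewrite -eC1 -eC2; apply: measurableI; last exact/measurableC/mpre.
  apply: measurableI; last exact/measurableC/mpre.
  exact/mpre/mlt.
have hcov : P (G N `&` A1 δ) <= P S + P (A1 δ `&` E1) + P (A1 δ `&` E2).
  apply: le_trans (_ : P (S `|` (A1 δ `&` E1) `|` (A1 δ `&` E2)) <= _).
    apply: le_measure => //; rewrite inE //.
    by apply: measurableU => //; exact: measurableU.
  apply: le_trans (measureU2 P _ _) _ => //; first exact: measurableU.
  by apply: leeD2r; apply: measureU2.
have f1 : P (A1 δ `&` E1) \is a fin_num.
  by rewrite ge0_fin_numE // (le_lt_trans (probability_le1 _ mI1)) ?ltry.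
have f2 : P (A1 δ `&` E2) \is a fin_num.
  by rewrite ge0_fin_numE // (le_lt_trans (probability_le1 _ mI2)) ?ltry.
move: hcov hq hE1.
rewrite -(fineK f1) -(fineK f2) prE PS add0e -EFinD -EFinM !lee_fin lte_fin.
move=> h1 h2 h3.
move: (fine (P (A1 δ `&` E1))) (fine (P (A1 δ `&` E2))) h1 h2 h3 => a b h1 h2 h3.
have {}h3 : (a <= pr / 4)%R := le_trans h3 βp.
clear -h1 h2 h3 δ0 pr0.
nra.
Qed.
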